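(* Let $S=(d,N_1,\dots,N_L)$ be a neural network architecture, let $C>0$, let $\Omega\subset\mathbb{R}^d$ be Borel measurable and bounded, and let $\varrho(x)=\max\{0,x\}$ be the ReLU. Then the set $\mathcal{RNN}_\varrho^{\Omega,C}(S)=\{\mathrm{R}_\varrho^\Omega(\Phi):\Phi\in\mathcal{NN}(S),\ \|\Phi\|_{\mathrm{scaling}}\le C\}$ is closed in $L^p(\mu;\mathbb{R}^{N_L})$ for every $p\in[1,\infty]$ and every finite Borel measure $\mu$ on $\Omega$. If $\Omega$ is compact, then $\mathcal{RNN}_\varrho^{\Omega,C}(S)$ is also closed in $C(\Omega;\mathbb{R}^{N_L})$.
   Context: A neural network with architecture $S=(N_0,\dots,N_L)$ ($N_0=d$) is a family $\Phi=((A_\ell,b_\ell))_{\ell=1}^L$, $A_\ell\in\mathbb{R}^{N_\ell\times N_{\ell-1}}$, $b_\ell\in\mathbb{R}^{N_\ell}$; $\mathcal{NN}(S)$ is the set of these; $\|\Phi\|_{\mathrm{scaling}}=\max_\ell\|A_\ell\|_{\max}$, where $\|\cdot\|_{\max}$ is the maximal absolute entry (no bound is imposed on the biases $b_\ell$). $\mathrm{R}_\varrho^\Omega(\Phi):\Omega\to\mathbb{R}^{N_L}$, $x\mapsto x_L$, where $x_0=x$, $x_\ell=\varrho(A_\ell x_{\ell-1}+b_\ell)$ for $1\le\ell\le L-1$ (componentwise), $x_L=A_Lx_{L-1}+b_L$. The norms are $\|f\|_{L^p(\mu;\mathbb{R}^{N_L})}=\|\,|f|\,\|_{L^p(\mu)}$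 and $\|f\|_{\sup}=\sup_x|f(x)|$ with $|\cdot|$ the Euclidean norm. *)

(* Defs.v *)
From HB Require Import structures.
From mathcomp Require Import all_boot all_order all_algebra.
From mathcomp Require Import all_classical all_reals all_analysis.
Set Implicit Arguments. Unset Strict Implicit. Unset Printing Implicit Defensive.
Import Order.TTheory GRing.Theory Num.Theory.
Import numFieldNormedType.Exports.
Local Open Scope ring_scope.
Local Open Scope classical_set_scope.

Definition borelRV (R : realType) (n : nat) :=
  g_sigma_algebraType (@open ('rV[R]_n)).

Definition eucl (R : realType) (n : nat) (v : 'rV[R]_n) : R :=
  Num.sqrt (\sum_(i < n) v ord0 i ^+ 2).

Definition relu (R : realType) (x : R) : R := Num.max 0 x.

(* An architecture S = (d, N_1, ..., N_L) is given by d and Ns = [N_1;...;N_L],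
   with L = size Ns >= 1.  width d Ns l = N_l. *)
Definition width (d : nat) (Ns : seq nat) (l : nat) : nat := nth 0%N (d :: Ns) l.

(* A network of architecture S: layer l (1 <= l <= L) has weight matrix
   A_l = (wA l i j)_{i < N_l, j < N_{l-1}} and bias b_l = (wb l i)_{i < N_l};
   entries outside these ranges (and layers outside 1..L) are never used. *)
Record network (R : realType) := Network {
  wA : nat -> nat -> nat -> R;
  wb : nat -> nat -> R }.

Definition scaling_norm (R : realType) (d : nat) (Ns : seq nat) (Phi : network R) : R :=
  \big[Num.max/0]_(l < size Ns)
    \big[Num.max/0]_(i < width d Ns l.+1)
      \big[Num.max/0]_(j < width d Ns l) `|wA Phi l.+1 i j|.

Fixpoint hidden (R : realType) (d : nat) (Ns : seq nat) (Phi : network R)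
    (x : 'rV[R]_d) (l : nat) : 'I_(width d Ns l) -> R :=
  match l as l0 return 'I_(width d Ns l0) -> R with
  | 0 => fun j => x ord0 j
  | l'.+1 => fun i => relu (\sum_(j < width d Ns l') wA Phi l'.+1 i j * @hidden R d Ns Phi x l' j
                            + wb Phi l'.+1 i)
  end.

Definition outdim (d : nat) (Ns : seq nat) : nat := width d Ns (size Ns).

Definition realize (R : realType) (d : nat) (Ns : seq nat) (Phi : network R)
    (x : 'rV[R]_d) : 'rV[R]_(outdim d Ns) :=
  \row_(i < outdim d Ns)
    (\sum_(j < width d Ns (size Ns).-1)
        wA Phi (size Ns) i j * @hidden R d Ns Phi x (size Ns).-1 j + wb Phi (size Ns) i).

(* Main.v *)
Require Import Defs.
From HB Require Import structures.
From mathcomp Require Import all_boot all_order all_algebra.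
From mathcomp Require Import all_classical all_reals all_analysis.
From mathcomp Require Import ring lra ess_sup_inf hoelder measurable_realfun.
Import Order.TTheory GRing.Theory Num.Theory.
Import numFieldNormedType.Exports.
Local Open Scope ring_scope.
Local Open Scope classical_set_scope.
Set Implicit Arguments. Unset Strict Implicit. Unset Printing Implicit Defensive.

Section Net.
Variable R : realType.
Variables (d : nat) (Ns : seq nat).
Local Notation W := (width d Ns).

Definition H (Phi : network R) (x : 'rV[R]_d) (l j : nat) : R :=
  match (insub j : option 'I_(W l)) with Some k => @hidden R d Ns Phi x l k | None => 0 end.

Lemma H_ord Phi x l (k : 'I_(W l)) : H Phi x l k = @hidden R d Ns Phi x l k.
Proof. by rewrite /H valK. Qed.

Lemma H0 Phi Psi x j : H Phi x 0 j = H Psi x 0 j.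
Proof. by rewrite /H; case: insub. Qed.

Lemma HS Phi x l i : (i < W l.+1)%N ->
  H Phi x l.+1 i = relu (\sum_(j < W l) wA Phi l.+1 i j * H Phi x l j + wb Phi l.+1 i).
Proof.
move=> hi; rewrite [LHS]/H insubT /=; congr (relu (_ + _)).
by apply: eq_bigr => j _; rewrite H_ord.
Qed.

Lemma realizeE Phi x (i : 'I_(outdim d Ns)) :
  realize Ns Phi x ord0 i = \sum_(j < W (size Ns).-1) wA Phi (size Ns) i j * H Phi x (size Ns).-1 j
     + wb Phi (size Ns) i.
Proof. rewrite mxE; congr (_ + _); apply: eq_bigr => j _; by rewrite H_ord. Qed.

Lemma H_local Phi Psi l : wA Phi = wA Psi ->
  (forall l' i, (0 < l' <= l)%N -> wb Phi l' i = wb Psi l' i) ->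
  forall x j, H Phi x l j = H Psi x l j.
Proof.
move=> eA; elim: l => [|l IH] eb x j; first exact: H0.
case: (ltnP j (W l.+1)) => hj; last by rewrite /H insubF // ltnNge hj.
rewrite !HS // eA eb ?leqnn //; congr (relu (_ + _)); apply: eq_bigr => k _.
by rewrite IH // => l' i /andP[h1 h2]; apply: eb; rewrite h1 (leq_trans h2).
Qed.

Lemma relu_lip (a b : R) : `|relu a - relu b| <= `|a - b|.
Proof.
rewrite /relu; case: (leP 0 a) => ha; case: (leP 0 b) => hb.
- by [].
- rewrite subr0 !ger0_norm //; lra.
- rewrite sub0r normrN (ger0_norm hb) ler0_norm; lra.
- by rewrite subrr normr0.
Qed.

Lemma relu_norm (a : R) : `|relu a| <= `|a|.
Proof. by have := relu_lip a 0; rewrite /relu maxxx !subr0. Qed.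

End Net.

Section Bnd.
Variable R : realType.

Lemma coord_le (n : nat) (x : 'rV[R]_n) j : `|x ord0 j| <= `|x|.
Proof.
have -> : `|x| = mx_norm x by [].
rewrite mx_normrE; exact: (le_bigmax _ _ (ord0, j)).
Qed.

Lemma bounded_coord d (Omega : set 'rV[R]_d) : bounded_set Omega ->
  exists B, 0 <= B /\ forall x, Omega x -> forall j, `|x ord0 j| <= B.
Proof.
move=> [M [Mr HM]]; exists (`|M| + 1); split; first by rewrite addr_ge0.
move=> x Ox j; apply: le_trans (coord_le x j) _.
have h : M < `|M| + 1 by have := real_ler_norm Mr; lra.
exact: (HM _ h x Ox).
Qed.

Variables (d : nat) (Ns : seq nat) (Omega : set 'rV[R]_d) (B : R).
Hypothesis B0 : 0 <= B.
Hypothesis HB : forall x, Omega x -> forall j, `|x ord0 j| <= B.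
Local Notation W := (width d Ns).

Lemma HBound (Psi : network R) l : exists K, 0 <= K /\
  forall x, Omega x -> forall j, `|H Ns Psi x l j| <= K.
Proof.
elim: l => [|l [K [K0 IH]]].
  exists B; split => // x Ox j; rewrite /H; case: insubP => [k _ _|_] /=.
    exact: HB.
  by rewrite normr0.
exists (\sum_(i < W l.+1) (\sum_(j < W l) `|wA Psi l.+1 i j| * K + `|wb Psi l.+1 i|)).
have ge0 : forall i : 'I_(W l.+1), 0 <= \sum_(j < W l) `|wA Psi l.+1 i j| * K + `|wb Psi l.+1 i|.
  by move=> i; apply: addr_ge0 => //; apply: sumr_ge0 => j _; apply: mulr_ge0.
split; first by apply: sumr_ge0 => i _; exact: ge0.
move=> x Ox j; case: (ltnP j (W l.+1)) => hj; last first.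
  by rewrite /H insubF ?normr0 ?sumr_ge0 // ltnNge hj.
rewrite HS //; apply: le_trans (relu_norm _) _.
pose i := Ordinal hj.
apply: le_trans (_ : _ <= \sum_(j < W l) `|wA Psi l.+1 i j| * K + `|wb Psi l.+1 i|) _.
  apply: le_trans (ler_normD _ _) _; apply: lerD => //.
  apply: le_trans (ler_norm_sum _ _ _) _; apply: ler_sum => k _.
  by rewrite normrM; apply: ler_wpM2l => //; exact: IH.
rewrite (bigD1 i) //= lerDl; apply: sumr_ge0 => k _; exact: ge0.
Qed.

End Bnd.

Lemma nearS2 {T} {F : set_system T} {FF : Filter F} (P Q Rr : T -> Prop) :
  F P -> F Q -> (forall x, P x -> Q x -> Rr x) -> F Rr.
Proof. by move=> hP hQ h; apply: filter_app hQ; apply: filterS hP => x px qx; exact: h. Qed.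
Lemma nearS3 {T} {F : set_system T} {FF : Filter F} (P Q S Rr : T -> Prop) :
  F P -> F Q -> F S -> (forall x, P x -> Q x -> S x -> Rr x) -> F Rr.
Proof.
move=> hP hQ hS h; apply: filter_app hS; apply: filter_app hQ.
by apply: filterS hP => x px qx sx; exact: h.
Qed.

Section Ultra.
Variable R : realType.
Variable U : set_system nat.
Hypothesis UU : UltraFilter U.

Lemma ultra_fmap (u : nat -> R) : UltraFilter (u @ U).
Proof.
split; first exact: fmap_proper_filter.
move=> G PG sub; rewrite predeqE => A; split; last exact: sub.
move=> GA; case: (in_ultra_setVsetC (u @^-1` A) UU) => // HC.
have GC : G (~` A) by apply: sub.
have : G (A `&` ~` A) by exact: filterI.
by rewrite setICr => /filter_ex [].
Qed.

Lemma ultra_lim (u : nat -> R) M : (\forall n \near U, `|u n| <= M) ->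
  exists a, `|a| <= M /\ forall e, 0 < e -> \forall n \near U, `|u n - a| <= e.
Proof.
move=> hM.
have cpt : compact (`[- M, M] : set R) by exact: segment_compact.
move: cpt; rewrite compact_ultra => /(_ (u @ U) (ultra_fmap u)).
have FA : (u @ U) `[- M, M].
  apply: filterS hM => n /=; rewrite in_itv /= -ler_norml => h.
  by [].
move=> /(_ FA) [a [Aa Ha]]; exists a; split.
  by move: Aa; rewrite /= in_itv /= -ler_norml.
move=> e e0; move/cvgrPdist_le : Ha => /(_ e e0).
by apply: filterS => n; rewrite distrC.
Qed.

Lemma trich (b : nat -> R) :
  (exists M, \forall n \near U, `|b n| <= M) \/
  (forall M, \forall n \near U, M < b n) \/
  (forall M, \forall n \near U, b n < M).
Proof.
case: (pselect (exists M, \forall n \near U, `|b n| <= M)) => [h|nh]; first by left.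
right.
have big : forall M, \forall n \near U, M < `|b n|.
  move=> M; case: (in_ultra_setVsetC [set n | `|b n| <= M] UU) => h.
    by exfalso; apply: nh; exists M.
  by apply: filterS h => n /= /negP; rewrite -ltNge.
case: (pselect (forall M, \forall n \near U, M < b n)) => [h|nh2]; first by left.
right; move/existsNP : nh2 => [M0 hM0].
have hle : \forall n \near U, b n <= M0.
  case: (in_ultra_setVsetC [set n | M0 < b n] UU) => h //.
  by apply: filterS h => n /= /negP; rewrite -leNgt.
move=> M; have := big (`|M| + `|M0|).
apply: filter_app; apply: filterS hle => n hn hb.
have hM := real_ler_norm (num_real M); have hN0 := real_ler_norm (num_real M0).
have n1 := normr_ge0 M; have n2 := normr_ge0 M0.
case: (leP 0 (b n)) => h0.
  by move: hb; rewrite (ger0_norm h0); lra.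
move: hb; rewrite (ltr0_norm h0).
have : - M <= `|M| by rewrite -normrN; apply: real_ler_norm; rewrite realN num_real.
lra.
Qed.

End Ultra.

Section Main.
Variable R : realType.
Variables (d : nat) (Ns : seq nat) (Omega : set 'rV[R]_d) (B : R).
Hypothesis B0 : 0 <= B.
Hypothesis HB : forall x, Omega x -> forall j, `|x ord0 j| <= B.
Local Notation W := (width d Ns).
Local Notation L := (size Ns).
Hypothesis HL : (0 < L)%N.
Variable C : R.
Hypothesis C0 : 0 <= C.
Variable Phis : nat -> network R.
Variable U : set_system nat.
Hypothesis UU : UltraFilter U.

Definition inrange l i j := [&& (0 < l <= L)%N, (i < W l)%N & (j < W l.-1)%N].

Variable Alim : nat -> nat -> nat -> R.
Hypothesis HA : forall l i j, inrange l i j -> `|Alim l i j| <= C /\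
  forall e, 0 < e -> \forall n \near U, `|wA (Phis n) l i j - Alim l i j| <= e.
Hypothesis Hw : forall n l i j, inrange l i j -> `|wA (Phis n) l i j| <= C.

Definition Psi bb := Network Alim bb.

Definition Good l bb (s : nat -> nat -> R) := forall j, (j < W l)%N -> forall e, 0 < e ->
  \forall n \near U, forall x, Omega x ->
    `|H Ns (Phis n) x l j - s n j - H Ns (Psi bb) x l j| <= e.

Lemma first_term l bb s : (l < L)%N -> Good l bb s -> forall i, (i < W l.+1)%N ->
  exists K1, 0 <= K1 /\
  (forall x, Omega x -> `|\sum_(j < W l) Alim l.+1 i j * H Ns (Psi bb) x l j| <= K1) /\
  forall e, 0 < e -> \forall n \near U, forall x, Omega x ->
    `|\sum_(j < W l) wA (Phis n) l.+1 i j * (H Ns (Phis n) x l j - s n j)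
      - \sum_(j < W l) Alim l.+1 i j * H Ns (Psi bb) x l j| <= e.
Proof.
move=> hl hG i hi.
have inr : forall j : 'I_(W l), inrange l.+1 i j.
  by move=> j; rewrite /inrange /= hi ltn_ord hl.
have [K [K0 HK]] := HBound Ns B0 HB (Psi bb) l.
exists (\sum_(j < W l) C * K); split; first by apply: sumr_ge0 => j _; exact: mulr_ge0.
split.
  move=> x Ox; apply: le_trans (ler_norm_sum _ _ _) _; apply: ler_sum => j _.
  rewrite normrM; apply: ler_pM => //; first exact: (HA (inr j)).1.
  exact: HK.
move=> e e0.
set S := \sum_(j < W l) (C + K).
have S0 : 0 <= S by apply: sumr_ge0 => j _; exact: addr_ge0.
set del := e / (S + 1).
have del0 : 0 < del by apply: divr_gt0 => //; lra.
have delS : del * S <= e.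
  rewrite /del mulrAC ler_pdivrMr; last lra.
  by rewrite ler_pM2l //; lra.
have : \forall n \near U, forall j : 'I_(W l),
   (forall x, Omega x -> `|H Ns (Phis n) x l j - s n j - H Ns (Psi bb) x l j| <= del) /\
   `|wA (Phis n) l.+1 i j - Alim l.+1 i j| <= del.
  apply: filter_forall => j; apply: filterI.
    exact: hG.
  exact: (HA (inr j)).2.
apply: filterS => n hn x Ox.
rewrite -sumrB; apply: le_trans (ler_norm_sum _ _ _) _.
apply: le_trans (_ : _ <= \sum_(j < W l) (C + K) * del) _; last first.
  by rewrite -mulr_suml mulrC.
apply: ler_sum => j _.
have [h1 h2] := hn j.
set an := wA (Phis n) l.+1 i j; set a := Alim l.+1 i j.
set vn := H Ns (Phis n) x l j - s n j; set v := H Ns (Psi bb) x l j.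
have -> : an * vn - a * v = an * (vn - v) + (an - a) * v by ring.
apply: le_trans (ler_normD _ _) _; rewrite !normrM mulrDl.
apply: lerD.
  apply: ler_pM => //; first exact: Hw.
  exact: h1.
rewrite mulrC; apply: ler_pM => //; exact: HK.
Qed.


Lemma relu_id (y : R) : 0 <= y -> relu y = y.
Proof. by move=> h; rewrite /relu max_r. Qed.
Lemma relu_0 (y : R) : y <= 0 -> relu y = 0.
Proof. by move=> h; rewrite /relu max_l. Qed.

Lemma normle (x y : R) : `|x| <= y -> -y <= x /\ x <= y.
Proof. by rewrite ler_norml => /andP. Qed.

Lemma step_i l bb s : (l < L)%N -> Good l bb s -> forall i, (i < W l.+1)%N ->
  exists c : R, exists sg : nat -> R,
  forall e, 0 < e -> \forall n \near U, forall x, Omega x ->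
   `|H Ns (Phis n) x l.+1 i - sg n
     - relu (\sum_(j < W l) Alim l.+1 i j * H Ns (Psi bb) x l j + c)| <= e.
Proof.
move=> hl hG i hi.
have [K1 [K10 [Hwb Hc]]] := first_term hl hG hi.
pose T := fun (n : nat) (x : 'rV[R]_d) => \sum_(j < W l) wA (Phis n) l.+1 i j * (H Ns (Phis n) x l j - s n j).
pose w := fun (x : 'rV[R]_d) => \sum_(j < W l) Alim l.+1 i j * H Ns (Psi bb) x l j.
pose be := fun (n : nat) => wb (Phis n) l.+1 i + \sum_(j < W l) wA (Phis n) l.+1 i j * s n j.
have eqH : forall n x, H Ns (Phis n) x l.+1 i = relu (T n x + be n).
  move=> n x; rewrite HS //; congr relu.
  have -> : T n x = \sum_(j < W l) wA (Phis n) l.+1 i j * H Ns (Phis n) x l j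
       - \sum_(j < W l) wA (Phis n) l.+1 i j * s n j.
    by rewrite /T -sumrB; apply: eq_bigr => j _; rewrite mulrBr.
  rewrite /be; ring.
have Hw1 : forall x, Omega x -> - K1 <= w x /\ w x <= K1.
  by move=> x Ox; move: (Hwb x Ox); rewrite ler_norml => /andP[].
case: (trich UU be) => [[M hM]|[hp|hn]].
- have [c [_ hc]] := ultra_lim UU hM.
  exists c, (fun=> 0) => e e0.
  have e20 : 0 < e / 2 by lra.
  apply: (nearS2 (hc _ e20) (Hc _ e20)) => n h1 h2 x Ox.
  rewrite subr0 eqH.
  apply: le_trans (relu_lip _ _) _.
  have -> : T n x + be n - (w x + c) = (T n x - w x) + (be n - c) by ring.
  apply: le_trans (ler_normD _ _) _.
  have := h2 x Ox; rewrite -/(T n x) -/(w x) => h3.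
  lra.
- exists (K1 + 1), (fun n => be n - (K1 + 1)) => e e0.
  apply: (nearS3 (hp (K1 + 2)) (Hc _ ltr01) (Hc _ e0)) => n hb h1 h2 x Ox.
  rewrite eqH.
  have := h1 x Ox; have := h2 x Ox; rewrite -/(T n x) -/(w x).
  have [wl wu] := Hw1 x Ox.
  move=> /normle [h3 h4] /normle [h5 h6].
  rewrite relu_id; last lra.
  rewrite relu_id; last lra.
  rewrite ler_norml; apply/andP; split; lra.
- exists (- (K1 + 1)), (fun=> 0) => e e0.
  apply: (nearS2 (hn (- (K1 + 2))) (Hc _ ltr01)) => n hb h1 x Ox.
  rewrite eqH.
  have := h1 x Ox; rewrite -/(T n x) -/(w x).
  have [wl wu] := Hw1 x Ox.
  move=> /normle [h5 h6].
  rewrite relu_0; last lra.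
  rewrite relu_0; last lra.
  by rewrite !subrr normr0; lra.
Qed.

Lemma step l bb s : (l < L)%N -> Good l bb s -> exists bb' s', Good l.+1 bb' s'.
Proof.
move=> hl hG.
have : forall i, exists cs : R * (nat -> R), (i < W l.+1)%N ->
  forall e, 0 < e -> \forall n \near U, forall x, Omega x ->
   `|H Ns (Phis n) x l.+1 i - cs.2 n
     - relu (\sum_(j < W l) Alim l.+1 i j * H Ns (Psi bb) x l j + cs.1)| <= e.
  move=> i; case: (ltnP i (W l.+1)) => hi.
    by have [c [sg h]] := step_i hl hG hi; exists (c, sg).
  by exists (0, fun=> 0).
move/choice => [f hf].
pose bb' := fun l' i => if l' == l.+1 then (f i).1 else bb l' i.
exists bb', (fun n i => (f i).2 n) => j hj e e0.
have eqloc : forall (x : 'rV[R]_d) (k : nat), H Ns (Psi bb') x l k = H Ns (Psi bb) x l k.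
  apply: (@H_local R d Ns (Psi bb') (Psi bb) l erefl) => l' i /andP[_ h].
  by rewrite /= /bb' ltn_eqF.
apply: filterS (hf j hj e e0) => n hn x Ox.
rewrite [H Ns (Psi bb') x l.+1 j]HS // /= /bb' eqxx.
have -> : \sum_(j0 < W l) Alim l.+1 j j0 * H Ns (Psi bb') x l j0 =
          \sum_(j0 < W l) Alim l.+1 j j0 * H Ns (Psi bb) x l j0.
  by apply: eq_bigr => k _; rewrite eqloc.
exact: hn.
Qed.

Lemma good_all l : (l < L)%N -> exists bb s, Good l bb s.
Proof.
elim: l => [_|l IH hl].
  exists (fun _ _ => 0), (fun _ _ => 0) => j hj e e0.
  apply: nearW => n x Ox.
  by rewrite subr0 (H0 Ns _ (Psi (fun _ _ => 0))) subrr normr0 ltW.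
have [bb [s hG]] := IH (ltnW hl).
exact: step (ltnW hl) hG.
Qed.

Lemma scaling_ok Phi : wA Phi = Alim -> scaling_norm d Ns Phi <= C.
Proof.
move=> eA; rewrite /scaling_norm eA.
apply: bigmax_le => // l _; apply: bigmax_le => // i _; apply: bigmax_le => // j _.
have h : inrange l.+1 i j by rewrite /inrange /= ltn_ord (ltn_ord i) (ltn_ord j).
exact: (HA h).1.
Qed.

Lemma final :
  (exists Phi : network R, wA Phi = Alim /\ forall i : 'I_(outdim d Ns), forall e, 0 < e ->
     \forall n \near U, forall x, Omega x ->
       `|realize Ns (Phis n) x ord0 i - realize Ns Phi x ord0 i| <= e)
  \/ (exists i : 'I_(outdim d Ns), forall M, \forall n \near U, forall x, Omega x ->
       M <= `|realize Ns (Phis n) x ord0 i|).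
Proof.
pose L1 := L.-1.
have hL1 : (L1 < L)%N by rewrite /L1 prednK.
have eL : L1.+1 = L by rewrite /L1 prednK.
have [bb [s hG]] := good_all hL1.
pose be := fun (n i : nat) => wb (Phis n) L i + \sum_(j < W L1) wA (Phis n) L i j * s n j.
pose T := fun (n i : nat) (x : 'rV[R]_d) =>
  \sum_(j < W L1) wA (Phis n) L i j * (H Ns (Phis n) x L1 j - s n j).
pose w := fun (i : nat) (x : 'rV[R]_d) => \sum_(j < W L1) Alim L i j * H Ns (Psi bb) x L1 j.
have FT : forall i : 'I_(outdim d Ns), exists K1, 0 <= K1 /\ (forall x, Omega x -> `|w i x| <= K1) /\ forall e, 0 < e -> \forall n \near U, forall x, Omega x -> `|T n i x - w i x| <= e.
  move=> i; have hi : (i < W L1.+1)%N by rewrite eL ltn_ord.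
  have := first_term hL1 hG hi; rewrite eL; exact.
have eqR : forall n x (i : 'I_(outdim d Ns)), realize Ns (Phis n) x ord0 i = T n i x + be n i.
  move=> n x i; rewrite realizeE.
  have -> : T n i x = \sum_(j < W L1) wA (Phis n) L i j * H Ns (Phis n) x L1 j
       - \sum_(j < W L1) wA (Phis n) L i j * s n j.
    by rewrite /T -sumrB; apply: eq_bigr => j _; rewrite mulrBr.
  rewrite /be; ring.
case: (pselect (forall i : 'I_(outdim d Ns), exists M, \forall n \near U, `|be n i| <= M)) => [hb|hnb].
- left.
  have : forall i : nat, exists c : R, forall hi : (i < outdim d Ns)%N,
     forall e, 0 < e -> \forall n \near U, `|be n i - c| <= e.
    move=> i; case: (ltnP i (outdim d Ns)) => hi.
      have [M hM] := hb (Ordinal hi).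
      by have [c [_ hc]] := ultra_lim UU hM; exists c => _.
    by exists 0.
  move/choice => [c hc].
  pose Phi := Network Alim (fun l' i => if l' == L then c i else bb l' i).
  exists Phi; split => // i e e0.
  have [K1 [_ [_ Hc]]] := FT i.
  have e20 : 0 < e / 2 by lra.
  apply: (nearS2 (Hc _ e20) (hc i (ltn_ord i) _ e20)) => n h1 h2 x Ox.
  have eqP1 : realize Ns Phi x ord0 i = w i x + c i.
    rewrite realizeE /= eqxx; congr (_ + _); apply: eq_bigr => j _; congr (_ * _).
    apply: (@H_local R d Ns Phi (Psi bb) L1 erefl) => l' k /andP[_ h].
    by rewrite /= ltn_eqF // -eL ltnS.
  rewrite eqR eqP1.
  have -> : T n i x + be n i - (w i x + c i) = (T n i x - w i x) + (be n i - c i) by ring.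
  apply: le_trans (ler_normD _ _) _.
  have := h1 x Ox; lra.
- right; move/existsNP : hnb => [i hi]; exists i => M.
  have [K1 [K10 [Hw1 Hc]]] := FT i.
  case: (trich UU (fun n => be n i)) => [hb|[hp|hn]].
  + by exfalso; apply: hi.
  + apply: (nearS2 (hp (M + K1 + 1)) (Hc _ ltr01)) => n h1 h2 x Ox.
    rewrite eqR; have [h3 h4] := normle (h2 x Ox); have [h5 h6] := normle (Hw1 x Ox).
    apply: le_trans (ler_norm _); lra.
  + apply: (nearS2 (hn (- (M + K1 + 1))) (Hc _ ltr01)) => n h1 h2 x Ox.
    rewrite eqR; have [h3 h4] := normle (h2 x Ox); have [h5 h6] := normle (Hw1 x Ox).
    rewrite -normrN; apply: le_trans (ler_norm _); lra.
Qed.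

End Main.

Section Core.
Variable R : realType.

Lemma coord_eucl n (v : 'rV[R]_n) i : `|v ord0 i| <= eucl v.
Proof.
rewrite /eucl -sqrtr_sqr ler_sqrt; last by apply: sumr_ge0 => j _; exact: sqr_ge0.
rewrite (bigD1 i) //= lerDl; apply: sumr_ge0 => j _; exact: sqr_ge0.
Qed.

Lemma coord_euclB n (u v : 'rV[R]_n) i : `|u ord0 i - v ord0 i| <= eucl (u - v).
Proof. by have := coord_eucl (u - v) i; rewrite !mxE. Qed.

Lemma close_eqR (a b : R) : (forall e, 0 < e -> `|a - b| <= e) -> a = b.
Proof.
move=> h; apply/eqP; rewrite -subr_eq0 -normr_eq0; apply/negPn/negP => hne.
have hp : 0 < `|a - b| by rewrite lt0r hne normr_ge0.
have h2 : 0 < `|a - b| / 2 by lra.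
have := h _ h2; lra.
Qed.

Lemma entries_bound d Ns (Phi : network R) C l i j :
  scaling_norm d Ns Phi <= C -> inrange d Ns l i j -> `|wA Phi l i j| <= C.
Proof.
move=> hs /and3P[/andP[l0 lL] hi hj].
case: l l0 lL hi hj => // l _ lL hi hj.
apply: le_trans hs.
pose l' : 'I_(size Ns) := Ordinal lL.
apply: le_trans (le_bigmax _ _ l').
apply: le_trans (le_bigmax _ _ (Ordinal hi : 'I_(width d Ns l'.+1))).
exact: (le_bigmax _ _ (Ordinal hj : 'I_(width d Ns l'))).
Qed.

Lemma core d Ns (Omega : set 'rV[R]_d) C (Phis : nat -> network R) :
  (0 < size Ns)%N -> 0 <= C -> bounded_set Omega ->
  (forall n, scaling_norm d Ns (Phis n) <= C) ->
  exists U : set_system nat, UltraFilter U /\ (\oo `<=` U) /\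
  exists Alim, (forall bb, scaling_norm d Ns (Network Alim bb) <= C) /\
  ((exists Phi : network R, scaling_norm d Ns Phi <= C /\
      forall i : 'I_(outdim d Ns), forall e, 0 < e ->
     \forall n \near U, forall x, Omega x ->
       `|realize Ns (Phis n) x ord0 i - realize Ns Phi x ord0 i| <= e)
  \/ (exists i : 'I_(outdim d Ns), forall M, \forall n \near U, forall x, Omega x ->
       M <= `|realize Ns (Phis n) x ord0 i|)).
Proof.
move=> HL C0 hb hs.
have [B [B0 HB]] := bounded_coord hb.
have [U [UU sU]] := ultraFilterLemma (@eventually_filter).
exists U; split => //; split => //.
have Hw : forall n l i j, inrange d Ns l i j -> `|wA (Phis n) l i j| <= C.
  by move=> n l i j; apply: entries_bound.
have : forall t : nat * nat * nat, exists a : R, inrange d Ns t.1.1 t.1.2 t.2 ->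
   `|a| <= C /\ forall e, 0 < e -> \forall n \near U,
      `|wA (Phis n) t.1.1 t.1.2 t.2 - a| <= e.
  move=> [[l i] j] /=; case: (boolP (inrange d Ns l i j)) => h.
    have := @ultra_lim R U UU (fun n => wA (Phis n) l i j) C.
    case; first by apply: nearW => n; exact: Hw.
    by move=> a ha; exists a.
  by exists 0.
move/choice => [g hg].
pose Alim l i j := g (l, i, j).
have HA : forall l i j, inrange d Ns l i j -> `|Alim l i j| <= C /\
  forall e, 0 < e -> \forall n \near U, `|wA (Phis n) l i j - Alim l i j| <= e.
  by move=> l i j h; exact: (hg (l, i, j)).
exists Alim; split.
  by move=> bb; apply: (scaling_ok C0 HA).
case: (final B0 HB HL C0 UU HA Hw) => [[Phi [eA h]]|h].
  by left; exists Phi; split => //; exact: (scaling_ok C0 HA).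
by right.
Qed.

End Core.

Lemma part_sup (R : realType) (d : nat) (Ns : seq nat) (C : R)
  (Omega : set 'rV[R]_d) :
  (0 < size Ns)%N -> 0 < C -> bounded_set Omega ->
   forall (f : 'rV[R]_d -> 'rV[R]_(outdim d Ns)) (Phis : nat -> network R),
     (forall n, scaling_norm d Ns (Phis n) <= C) ->
     (forall eps : R, 0 < eps -> \forall n \near \oo,
        forall x, Omega x -> eucl (realize Ns (Phis n) x - f x) <= eps) ->
     exists Phi : network R, scaling_norm d Ns Phi <= C /\
       (forall x, Omega x -> realize Ns Phi x = f x).
Proof.
move=> HL C0 hb f Phis hs hc.
have [U [UU [sU [Alim [hAl hcase]]]]] := core HL (ltW C0) hb hs.
have hcU : forall e, 0 < e -> \forall n \near U, forall x, Omega x ->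
    eucl (realize Ns (Phis n) x - f x) <= e.
  by move=> e e0; apply: sU; exact: hc.
case: hcase => [[Phi [sPhi hPhi]]|[i hi]].
  exists Phi; split => // x Ox; apply/rowP => i.
  apply: close_eqR => e e0.
  have e20 : 0 < e / 2 by lra.
  have [n [h1 h2]] := filter_ex (filterI (hPhi i _ e20) (hcU _ e20)).
  have h3 := le_trans (coord_euclB _ _ i) (h2 x Ox).
  move: (h1 x Ox) h3.
  set a := realize Ns (Phis n) x 0 i; set b := realize Ns Phi x 0 i; set c := f x 0 i.
  move=> h1' h3'.
  have -> : b - c = (a - c) - (a - b) by ring.
  apply: le_trans (ler_normB _ _) _; lra.
case: (pselect (exists x, Omega x)) => [[x0 Ox0]|nO]; last first.
  exists (Network Alim (fun _ _ => 0)); split => // x Ox.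
  by exfalso; apply: nO; exists x.
have := filter_ex (filterI (hi (`|f x0 ord0 i| + 2)) (hcU _ ltr01)).
move=> [n [h1 h2]].
have h3 := le_trans (coord_euclB _ _ i) (h2 x0 Ox0).
move: (h1 x0 Ox0) h3.
set a := realize Ns (Phis n) x0 ord0 i; set c := f x0 ord0 i.
move=> h1' h3'.
have : `|a| <= `|a - c| + `|c| by have := ler_normD (a - c) c; rewrite subrK.
lra.
Qed.

Section Meas.
Variable R : realType.

Lemma mcoord n (i : 'I_n) :
  measurable_fun [set: borelRV R n] (fun v : 'rV[R]_n => v ord0 i).
Proof.
apply: (measurability _ (RGenOpens.measurableE R)).
move=> _ [_ [a [b ->] <-]].
apply: sub_sigma_algebra; rewrite setTI.
apply: (proj1 (continuousP _) (@coord_continuous R 1 n ord0 i)).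
exact: interval_open.
Qed.

Variables (d : nat) (Ns : seq nat).

Lemma mH (Phi : network R) l j :
  measurable_fun [set: borelRV R d] (fun x : 'rV[R]_d => H Ns Phi x l j).
Proof.
elim: l j => [|l IH] j.
  rewrite /H; case: insubP => [k _ _|_] /=; last exact: measurable_cst.
  exact: mcoord.
case: (ltnP j (width d Ns l.+1)) => hj; last first.
  rewrite /H insubF; first exact: measurable_cst.
  by rewrite ltnNge hj.
rewrite (_ : (fun x => _) = (fun x => Num.max 0
   ((\sum_(k < width d Ns l) wA Phi l.+1 j k * H Ns Phi x l k) + wb Phi l.+1 j))); last first.
  by apply: funext => x; rewrite HS.
apply: (@measurable_maxr _ _ R setT (cst 0)); first exact: measurable_cst.
apply: measurable_funD; last exact: measurable_cst.
apply: measurable_sum => k; apply: measurable_funM; first exact: measurable_cst.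
exact: IH.
Qed.

Lemma mreal (Phi : network R) (i : 'I_(outdim d Ns)) :
  measurable_fun [set: borelRV R d] (fun x : 'rV[R]_d => realize Ns Phi x ord0 i).
Proof.
rewrite (_ : (fun x => _) = (fun x => (\sum_(j < width d Ns (size Ns).-1)
   wA Phi (size Ns) i j * H Ns Phi x (size Ns).-1 j) + wb Phi (size Ns) i)); last first.
  by apply: funext => x; rewrite realizeE.
apply: measurable_funD; last exact: measurable_cst.
apply: measurable_sum => k; apply: measurable_funM; first exact: measurable_cst.
exact: mH.
Qed.

End Meas.

Section LB.
Variable R : realType.
Variable d : nat.
Variable mu : {finite_measure set (borelRV R d) -> \bar R}.
Variable p : \bar R.
Hypothesis p1 : (1 <= p)%E.


Lemma LB (A : set (borelRV R d)) (mA : measurable A) (muA : (0 < mu A)%E) c (c0 : 0 < c) :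
  exists del : R, 0 < del /\ forall G : borelRV R d -> R, (forall x, A x -> c <= G x) ->
    (del%:E <= Lnorm mu p (fun x => (G x)%:E))%E.
Proof.
have muT : (0 < mu setT)%E.
  by apply: lt_le_trans muA _; apply: le_measure => //; rewrite inE.
case: p p1 => [r| |] //; last first.
  move=> _; exists c; split => // G hG.
  rewrite unlock /Lnorm muT.
  rewrite leNgt; apply/negP => hlt.
  have [N [mN N0 sub]] := ess_sup_ge mu (abse \o (fun x => (G x)%:E)).
  have : (mu A <= mu N)%E.
    apply: le_measure => //; rewrite ?inE //.
    move=> x Ax; apply: sub => /= hx.
    have := le_lt_trans hx hlt; rewrite /= lte_fin => h.
    have := hG x Ax; have := ler_norm (G x); lra.
  by rewrite N0 leNgt muA.
rewrite lee_fin => r1.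
have r0 : 0 < r by lra.
have finA : mu A \is a fin_num by rewrite fin_num_measure.
set m := fine (mu A).
have m0 : 0 < m by rewrite /m fine_gt0 // muA /= ltey_eq finA.
exists (c * m `^ r^-1); split; first by rewrite mulr_gt0 // powR_gt0.
move=> G hG.
have hint : ((c `^ r * m)%:E <= \int[mu]_x (`|(G x)%:E| `^ r))%E.
  rewrite ge0_integralTE; last by move=> x; exact: poweR_ge0.
  have cr0 : 0 <= c `^ r by exact: powR_ge0.
  apply: ereal_sup_ubound => /=.
  exists (scale_nnsfun (indic_nnsfun R mA) cr0).
    move=> x /=; rewrite mindicE; case: (boolP (x \in A)) => hx.
      rewrite mulr1 lee_fin.
      apply: ge0_ler_powR; rewrite ?nnegrE ?normr_ge0 //; [lra|lra|].
      rewrite inE in hx; have := hG x hx; have := ler_norm (G x); lra.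
    by rewrite mulr0 lee_fin powR_ge0.
  rewrite /scale_nnsfun /mul_nnsfun /=.
  by rewrite sintegralrM sintegral_indic // EFinM /m fineK.
have -> : (c * m `^ r^-1)%:E = (((c `^ r * m)%:E) `^ r^-1)%E.
  rewrite poweR_EFin powRM ?powR_ge0 ?(ltW m0) // -powRrM mulfV ?gt_eqF //.
  by rewrite powRr1 // ltW.
rewrite unlock /Lnorm.
apply: gt0_ler_poweR; first by rewrite invr_ge0 ltW.
- by rewrite in_itv /= leey andbT lee_fin mulr_ge0 ?powR_ge0 ?ltW.
- by rewrite in_itv /= leey andbT; apply: integral_ge0 => x _; rewrite ?lee_fin ?powR_ge0 ?poweR_ge0.
- exact: hint.
Qed.

End LB.

Section Lp.
Variable R : realType.
Variables (d : nat) (Ns : seq nat) (Omega : set 'rV[R]_d).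
Hypothesis mO : measurable (Omega : set (borelRV R d)).
Variable mu : {finite_measure set (borelRV R d) -> \bar R}.
Variable p : \bar R.
Hypothesis p1 : (1 <= p)%E.
Hypothesis muO : mu (~` (Omega : set (borelRV R d))) = 0%E.
Variable f : borelRV R d -> borelRV R (outdim d Ns).
Hypothesis mf : measurable_fun (Omega : set (borelRV R d)) f.
Variable Phis : nat -> network R.
Hypothesis hconv : (fun n => Lnorm mu p (fun x => (eucl (realize Ns (Phis n) x - f x))%:E))
         @ \oo --> 0%E.
Variable U : set_system nat.
Hypothesis UU : UltraFilter U.
Hypothesis sU : \oo `<=` U.

Lemma small del : 0 < del -> \forall n \near U,
  (Lnorm mu p (fun x => (eucl (realize Ns (Phis n) x - f x))%:E) < del%:E)%E.
Proof.
move=> del0; apply: sU.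
have /hconv : nbhs (0%E : \bar R) [set y | (y < del%:E)%E].
  apply/nbhs_EFin; exists del => //= x; rewrite /ball /= sub0r normrN lte_fin => h.
  exact: le_lt_trans (ler_norm x) h.
by [].
Qed.

Lemma null_of (A : set (borelRV R d)) : measurable A -> forall c, 0 < c ->
  (\forall n \near U, forall x, A x -> c <= eucl (realize Ns (Phis n) x - f x)) ->
  mu A = 0%E.
Proof.
move=> mA c c0 hA.
case: (eqVneq (mu A) 0%E) => // hne; exfalso.
have muA : (0 < mu A)%E by rewrite lt0e hne measure_ge0.
have [del [del0 hdel]] := LB p1 mA muA c0.
have [n [h1 h2]] := filter_ex (filterI hA (small del0)).
have := hdel _ h1.
by rewrite leNgt h2.
Qed.

Lemma mcoordf (i : 'I_(outdim d Ns)) :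
  measurable_fun (Omega : set (borelRV R d)) (fun x => f x ord0 i).
Proof. exact: (measurableT_comp (mcoord i) mf). Qed.

Lemma aeA (Phi : network R) :
  (forall i : 'I_(outdim d Ns), forall e, 0 < e -> \forall n \near U, forall x, Omega x ->
     `|realize Ns (Phis n) x ord0 i - realize Ns Phi x ord0 i| <= e) ->
  {ae mu, forall x, realize Ns Phi x = f x}.
Proof.
move=> hA.
have hi : forall i : 'I_(outdim d Ns),
    {ae mu, forall x, realize Ns Phi x ord0 i = f x ord0 i}.
  move=> i.
  pose g := fun x : borelRV R d => realize Ns Phi x ord0 i - f x ord0 i.
  have mg : measurable_fun (Omega : set (borelRV R d)) (fun x => `|g x|).
    apply: measurableT_comp; first exact: normr_measurable.
    apply: measurable_funB; last exact: mcoordf.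
    by move: (@mreal R d Ns Phi i); apply: measurable_funS.
  pose A := fun k : nat => (Omega : set (borelRV R d)) `&`
      ((fun x => `|g x|) @^-1` `]k.+1%:R^-1, +oo[).
  have mA k : measurable (A k) by apply: mg => //; exact: measurable_itv.
  have A0 k : mu (A k) = 0%E.
    have c0 : 0 < k.+1%:R^-1 / 2 :> R by rewrite divr_gt0 // invr_gt0.
    apply: (null_of (mA k) c0).
    apply: filterS (hA i _ c0) => n hn x [Ox hx].
    rewrite /= in_itv /= andbT in hx.
    have h1 := hn x Ox.
    have h2 := coord_euclB (realize Ns (Phis n) x) (f x) i.
    have h3 : `|g x| <= `|realize Ns (Phis n) x ord0 i - f x ord0 i|
        + `|realize Ns (Phis n) x ord0 i - realize Ns Phi x ord0 i|.
      have -> : g x = (realize Ns (Phis n) x ord0 i - f x ord0 i)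
          - (realize Ns (Phis n) x ord0 i - realize Ns Phi x ord0 i) by rewrite /g; ring.
      exact: ler_normB.
    have hx' : (k.+1%:R^-1 : R) < `|g x| by exact: hx.
    move: hx' h1 h2 h3; generalize (k.+1%:R^-1 : R) => q.
    set a := realize Ns (Phis n) x ord0 i; set b := realize Ns Phi x ord0 i.
    set c := f x ord0 i; set E := eucl _; set G := `|g x|.
    lra.
  apply: (@negligibleS _ _ _ _ (~` (Omega : set (borelRV R d)) `|` \bigcup_k A k)).
    move=> x /= hx; case: (pselect (Omega x)) => Ox; [right|by left].
    have gx : 0 < `|g x|.
      rewrite normr_gt0 /g subr_eq0; apply/eqP => h; exact: hx.
    have [k hk] := ltr_add_invr gx; exists k => //; split => //.
    by rewrite /= in_itv /= andbT; rewrite add0r in hk.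
  apply: negligibleU.
    by apply/negligibleP => //; exact: measurableC.
  by apply: negligible_bigcup => k; exact: ((negligibleP mu (mA k)).2 (A0 k)).
have hall := @filter_forall _ _ (fun i x => realize Ns Phi x ord0 i = f x ord0 i) _
  (ae_filter_ringOfSetsType mu) hi.
apply: (negligibleS _ hall) => x /= hx h; apply: hx; apply/rowP => i; exact: h.
Qed.

Lemma aeB (i : 'I_(outdim d Ns)) :
  (forall M, \forall n \near U, forall x, Omega x ->
       M <= `|realize Ns (Phis n) x ord0 i|) ->
  forall P : borelRV R d -> Prop, {ae mu, forall x, P x}.
Proof.
move=> hB P.
pose E := fun M : nat => (Omega : set (borelRV R d)) `&`
      ((fun x => f x ord0 i) @^-1` `[- M%:R, M%:R]).
have mE M : measurable (E M) by apply: mcoordf => //; exact: measurable_itv.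
have E0 M : mu (E M) = 0%E.
  apply: (null_of (mE M) ltr01).
  apply: filterS (hB (M%:R + 1)) => n hn x [Ox hx].
  rewrite /= in_itv /= -ler_norml in hx.
  have h1 := hn x Ox.
  have h2 := coord_euclB (realize Ns (Phis n) x) (f x) i.
  have h3 := ler_normB (realize Ns (Phis n) x ord0 i) (f x ord0 i).
  have h4 : `|realize Ns (Phis n) x ord0 i| - `|f x ord0 i| <=
            `|realize Ns (Phis n) x ord0 i - f x ord0 i| by exact: lerB_dist.
  lra.
apply: (@negligibleS _ _ _ _ (~` (Omega : set (borelRV R d)) `|` \bigcup_k E k)).
  move=> x _; case: (pselect (Omega x)) => Ox; [right|by left].
  exists (Num.Def.archi_bound `|f x ord0 i|) => //; split => //.
  rewrite /= in_itv /= -ler_norml; apply: ltW; exact: archi_boundP.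
apply: negligibleU.
  by apply/negligibleP => //; exact: measurableC.
by apply: negligible_bigcup => k; exact: ((negligibleP mu (mE k)).2 (E0 k)).
Qed.

End Lp.

Unset Implicit Arguments.

Theorem proposition3p7 (R : realType) (d : nat) (Ns : seq nat) (C : R)
  (Omega : set 'rV[R]_d) :
  (0 < size Ns)%N -> 0 < C ->
  measurable (Omega : set (borelRV R d)) ->
  bounded_set Omega ->
  (* closedness in L^p(mu; R^{N_L}) for all p in [1, oo] and finite Borel mu on Omega *)
  (forall (p : \bar R) (mu : {finite_measure set (borelRV R d) -> \bar R}),
     (1 <= p)%E ->
     mu (~` (Omega : set (borelRV R d))) = 0%E ->
     forall (f : borelRV R d -> borelRV R (outdim d Ns)) (Phis : nat -> network R),
       measurable_fun (Omega : set (borelRV R d)) f ->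
       (forall n, scaling_norm d Ns (Phis n) <= C) ->
       (fun n => Lnorm mu p (fun x => (eucl (realize Ns (Phis n) x - f x))%:E))
         @ \oo --> 0%E ->
       exists Phi : network R, scaling_norm d Ns Phi <= C /\
         {ae mu, forall x, realize Ns Phi x = f x})
  /\
  (* closedness in C(Omega; R^{N_L}) with the sup norm, when Omega is compact *)
  (compact Omega ->
   forall (f : 'rV[R]_d -> 'rV[R]_(outdim d Ns)) (Phis : nat -> network R),
     {within Omega, continuous f} ->
     (forall n, scaling_norm d Ns (Phis n) <= C) ->
     (forall eps : R, 0 < eps -> \forall n \near \oo,
        forall x, Omega x -> eucl (realize Ns (Phis n) x - f x) <= eps) ->
     exists Phi : network R, scaling_norm d Ns Phi <= C /\
       (forall x, Omega x -> realize Ns Phi x = f x)).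
Proof.
move=> HL C0 mO hb; split.
  move=> p mu p1 muO f Phis mf hs hconv.
  have [U [UU [sU [Alim [hAl hcase]]]]] := core HL (ltW C0) hb hs.
  case: hcase => [[Phi [sPhi hPhi]]|[i hi]].
    by exists Phi; split => //; apply: (aeA mO p1 muO mf hconv UU sU hPhi).
  exists (Network Alim (fun _ _ => 0)); split => //.
  exact: (aeB mO p1 muO mf hconv UU sU hi).
move=> _ f Phis _ hs hc; exact: part_sup.
Qed.
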